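(* There is an absolute constant $C_8$ such that for all $p\in(0,0.1)$, the number of good sequences of rectangles (over all lengths $n\ge1$) is at most $$\exp\Big[\frac{C_8}{\sqrt q}(\log q^{-1})^2\Big].$$
   Context: $q=-\log(1-p)$, $A=\lceil 1/\sqrt q\rceil$, $B=\lfloor q^{-1}\log q^{-1}\rfloor$. A rectangle is $\{a,\dots,c\}\times\{b,\dots,d\}\subset\mathbb{Z}^2$ with dimensions $(c-a+1,d-b+1)$. A sequence of rectangles $R_1,\dots,R_{n+1}$ ($n\ge1$) with $\dim(R_i)=(a_i,b_i)$, $s_i=a_{i+1}-a_i$, $t_i=b_{i+1}-b_i$ is good if: (i) $(0,0)\in R_1\subseteq\dots\subseteq R_{n+1}$; (ii) $\min(a_1,b_1)\in[A,A+3]$; (iii) $a_n+b_n\le B$; (iv) $a_{n+1}+b_{n+1}>B$; (v) for $i=1,\dots,n$, $s_i\ge a_i\sqrt q$ or $t_i\ge b_i\sqrt q$; (vi) for $i=1,\dots,n$, $s_i<a_i\sqrt q+4$ and $t_i<b_i\sqrt q+4$. *)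

(* Defs.v *)
From Stdlib Require Import Reals Lra Lia ZArith List.
Open Scope R_scope.

Definition qq (p : R) : R := - ln (1 - p).

(* floor and ceiling via Stdlib's [up] (up x = least integer > x) *)
Definition Zfloor (x : R) : Z := (up x - 1)%Z.
Definition Zceil (x : R) : Z := (- Zfloor (- x))%Z.

Definition Aconst (p : R) : Z := Zceil (1 / sqrt (qq p)).
Definition Bconst (p : R) : Z := Zfloor (/ qq p * ln (/ qq p)).

(* A rectangle {a..c} x {b..d} is encoded by the quadruple (a, b, c, d). *)
Definition rect : Type := (Z * Z * Z * Z)%type.

Definition in_rect (r : rect) (x y : Z) : Prop :=
  let '(a, b, c, d) := r in (a <= x <= c)%Z /\ (b <= y <= d)%Z.

Definition rect_subset (r r' : rect) : Prop :=
  forall x y : Z, in_rect r x y -> in_rect r' x y.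

Definition dimA (r : rect) : Z := let '(a, _, c, _) := r in (c - a + 1)%Z.
Definition dimB (r : rect) : Z := let '(_, b, _, d) := r in (d - b + 1)%Z.

Definition rect0 : rect := (0, 0, 0, 0)%Z.

(* A list Rs = [R_1; ...; R_{n+1}] (0-based: R_{i+1} = nth i Rs) is good. *)
Definition good (p : R) (Rs : list rect) : Prop :=
  let R_ i := nth i Rs rect0 in
  let a_ i := dimA (R_ i) in
  let b_ i := dimB (R_ i) in
  let n := (length Rs - 1)%nat in
  let sq := sqrt (qq p) in
  (1 <= n)%nat /\
  in_rect (R_ 0%nat) 0 0 /\
  (forall i : nat, (i < n)%nat -> rect_subset (R_ i) (R_ (S i))) /\
  (Aconst p <= Z.min (a_ 0%nat) (b_ 0%nat) <= Aconst p + 3)%Z /\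
  (* (iii) *)
  (a_ (n - 1)%nat + b_ (n - 1)%nat <= Bconst p)%Z /\
  (a_ n + b_ n > Bconst p)%Z /\
  (* (v) and (vi), for i = 1..n (0-based i = 0..n-1) *)
  (forall i : nat, (i < n)%nat ->
     let s := (a_ (S i) - a_ i)%Z in
     let t := (b_ (S i) - b_ i)%Z in
     (IZR s >= IZR (a_ i) * sq \/ IZR t >= IZR (b_ i) * sq) /\
     (IZR s < IZR (a_ i) * sq + 4 /\ IZR t < IZR (b_ i) * sq + 4)).

(* Main.v *)
Require Import Defs.
From Stdlib Require Import Reals List Lra Lia ZArith.
Open Scope R_scope.
From Stdlib Require Import Lia.

Lemma exp_le_inv' x y : exp x <= exp y -> x <= y.
Proof. intros H. destruct (Rle_lt_dec x y); auto. apply exp_increasing in r. lra. Qed.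

Lemma exp_mono x y : x <= y -> exp x <= exp y.
Proof. intros [H|H]. left; now apply exp_increasing. subst; lra. Qed.

Lemma exp_pow' x k : exp x ^ k = exp (INR k * x).
Proof. induction k. simpl. rewrite Rmult_0_l, exp_0; lra.
 rewrite S_INR. simpl. rewrite IHk. rewrite <- exp_plus. f_equal; lra. Qed.

Lemma exp_half_le x : 0 <= x <= 1 -> exp (x/2) <= 1 + x.
Proof. intros H. pose proof (exp_ineq1_le (-(x/2))).
 assert (E: exp (x/2) * exp (-(x/2)) = 1) by (rewrite <- exp_plus; replace (x/2 + - (x/2)) with 0 by lra; apply exp_0).
 pose proof (exp_pos (x/2)). nra. Qed.

Lemma Zfloor_le x : IZR (Zfloor x) <= x.
Proof. unfold Zfloor. destruct (archimed x). rewrite minus_IZR. lra. Qed.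
Lemma Zceil_ge x : x <= IZR (Zceil x).
Proof. unfold Zceil, Zfloor. destruct (archimed (-x)). rewrite opp_IZR, minus_IZR. lra. Qed.

Lemma q_facts p : 0 < p < 1/10 -> 0 < qq p < 1/9.
Proof. intros H. unfold qq. split.
 - assert (ln (1-p) < 0). { rewrite <- ln_1. apply ln_increasing; lra. } lra.
 - rewrite <- ln_Rinv by lra. pose proof (exp_ineq1_le (/(1-p) - 1)).
   assert (/(1-p) < 10/9). { apply (Rmult_lt_reg_r (1-p)). lra. rewrite Rinv_l by lra. lra. }
   assert (ln (/(1-p)) <= /(1-p) - 1). { apply exp_le_inv'. rewrite exp_ln. lra. apply Rinv_0_lt_compat; lra. }
   lra.
Qed.
Fixpoint upto {T} (S : list T) (m : nat) : list (list T) :=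
  match m with
  | O => nil :: nil
  | S m' => nil :: flat_map (fun x => map (cons x) (upto S m')) S
  end.

Lemma upto_len {T} (S : list T) m : (length (upto S m) <= (length S + 1) ^ m)%nat.
Proof.
  induction m; simpl. lia.
  assert (forall l : list T, length (flat_map (fun x => map (cons x) (upto S m)) l) = length l * length (upto S m))%nat.
  { induction l; simpl. lia. rewrite length_app, length_map, IHl. lia. }
  rewrite H. simpl Nat.pow. set (X := ((length S + 1) ^ m)%nat) in *. assert (1 <= X)%nat by (subst X; apply Nat.neq_0_lt_0, Nat.pow_nonzero; lia). nia.
Qed.

Lemma upto_in {T} (S : list T) m : forall l, (length l <= m)%nat -> (forall x, In x l -> In x S) -> In l (upto S m).
Proof.
  induction m; intros l Hl Hin.
  - destruct l; simpl in *; [auto | lia].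
  - destruct l as [|x l]; simpl; [auto|]. right. apply in_flat_map. exists x. split.
    apply Hin; simpl; auto. apply in_map. apply IHm. simpl in Hl; lia. intros y Hy; apply Hin; simpl; auto.
Qed.

Definition box (K : Z) : list Z := map (fun i => (Z.of_nat i - K)%Z) (seq 0 (Z.to_nat (2*K+1))).

Lemma box_len K : length (box K) = Z.to_nat (2*K+1).
Proof. unfold box. now rewrite length_map, length_seq. Qed.

Lemma box_in K z : (-K <= z <= K)%Z -> In z (box K).
Proof. intros H. unfold box. apply in_map_iff. exists (Z.to_nat (z + K)). split.
 rewrite Z2Nat.id; lia. apply in_seq. lia. Qed.

Definition rects (K : Z) : list rect :=
  list_prod (list_prod (list_prod (box K) (box K)) (box K)) (box K).

Lemma rects_len K : length (rects K) = (Z.to_nat (2*K+1) ^ 4)%nat.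
Proof. unfold rects. change (length (list_prod (list_prod (list_prod (box K) (box K)) (box K)) (box K)) = (Z.to_nat (2*K+1) ^ 4)%nat). rewrite !length_prod, !box_len. simpl. lia. Qed.

Lemma rects_in K (r : rect) : in_rect r 0 0 -> (dimA r + dimB r <= K)%Z -> In r (rects K).
Proof. destruct r as [[[a b] c] d]. simpl. intros [H1 H2] H3.
 unfold rects. repeat (apply in_prod); apply box_in; lia. Qed.

Lemma sub_dims r r' : in_rect r 0 0 -> rect_subset r r' ->
  (dimA r <= dimA r')%Z /\ (dimB r <= dimB r')%Z /\ in_rect r' 0 0.
Proof.
  destruct r as [[[a b] c] d]; destruct r' as [[[a' b'] c'] d']. unfold rect_subset. simpl.
  intros H S. pose proof (S a b) as S1. pose proof (S c d) as S2. pose proof (S 0%Z 0%Z H).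
  assert (a <= a <= c /\ b <= b <= d)%Z as h1 by lia.
  assert (a <= c <= c /\ b <= d <= d)%Z as h2 by lia.
  specialize (S1 h1). specialize (S2 h2). lia.
Qed.

Lemma dims_pos r : in_rect r 0 0 -> (1 <= dimA r)%Z /\ (1 <= dimB r)%Z.
Proof. destruct r as [[[a b] c] d]. simpl. lia. Qed.

Lemma good_analysis p Rs (sq A B : R) :
  good p Rs -> sq = sqrt (qq p) -> 0 < sq < 1/3 -> 
  / (sq * sq) <= IZR (Aconst p) * IZR (Aconst p) -> 0 <= IZR (Aconst p) ->
  let n := (length Rs - 1)%nat in
  (1 <= n)%nat /\
  (forall i, (i <= n)%nat -> in_rect (nth i Rs rect0) 0 0 /\
       (dimA (nth i Rs rect0) + dimB (nth i Rs rect0) <= 2 * Bconst p + 8)%Z) /\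
  / (sq * sq) * (1 + sq) ^ (n - 1) <= IZR (Bconst p) * IZR (Bconst p) / 4 /\ (2 <= Bconst p)%Z.
Proof.
  intros Hg Hsq Hs HA HA0 n. unfold good in Hg. cbv zeta in Hg. rewrite <- Hsq in Hg.
  fold n in Hg.
  destruct Hg as (Hn & H0 & Hsub & HAb & Hiii & Hiv & Hv).
  set (a := fun i => dimA (nth i Rs rect0)) in *.
  set (b := fun i => dimB (nth i Rs rect0)) in *.
  assert (Hin : forall i, (i <= n)%nat -> in_rect (nth i Rs rect0) 0 0).
  { induction i; intros Hi; auto. apply (sub_dims (nth i Rs rect0)). apply IHi; lia. apply Hsub; lia. }
  assert (Hmon : forall i, (i < n)%nat -> (a i <= a (S i))%Z /\ (b i <= b (S i))%Z).
  { intros i Hi. destruct (sub_dims (nth i Rs rect0) (nth (S i) Rs rect0)) as (? & ? & ?).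
    apply Hin; lia. apply Hsub; lia. unfold a, b; lia. }
  assert (Hmon2 : forall j i, (i <= j <= n)%nat -> (a i <= a j)%Z /\ (b i <= b j)%Z).
  { induction j; intros i Hij. replace i with 0%nat by lia. lia.
    destruct (Nat.eq_dec i (S j)). subst; lia. destruct (IHj i) as [? ?]. lia.
    destruct (Hmon j) as [? ?]; lia. }
  assert (Hpos : forall i, (i <= n)%nat -> (1 <= a i)%Z /\ (1 <= b i)%Z).
  { intros i Hi. apply dims_pos. now apply Hin. }
  unfold a, b in *; cbv beta in *; clear a b.
  assert (HSn : S (n - 1) = n) by lia.
  destruct (Hv (n-1)%nat ltac:(lia)) as [_ [Hva Hvb]]. rewrite HSn in Hva, Hvb.
  rewrite minus_IZR in Hva, Hvb.
  destruct (Hpos (n-1)%nat ltac:(lia)) as [Ha1 Hb1].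
  assert (HBge : (2 <= Bconst p)%Z) by lia.
  apply IZR_le in Ha1. apply IZR_le in Hb1.
  assert (Hn2 : (dimA (nth n Rs rect0) + dimB (nth n Rs rect0) <= 2 * Bconst p + 8)%Z).
  { apply IZR_le in Hiii. rewrite plus_IZR in Hiii.
    apply le_IZR. rewrite !plus_IZR, !mult_IZR.
    assert (IZR (dimA (nth (n-1) Rs rect0)) * sq <= IZR (dimA (nth (n-1) Rs rect0)) / 3) by nra.
    assert (IZR (dimB (nth (n-1) Rs rect0)) * sq <= IZR (dimB (nth (n-1) Rs rect0)) / 3) by nra. lra. }
  split; [lia|]. split.
  { intros i Hi. split. now apply Hin. destruct (Hmon2 n i) as [? ?]; [lia|]. lia. }
  split; [|lia].
  assert (Hprod : forall i, (i <= n - 1)%nat -> / (sq * sq) * (1 + sq) ^ i <= IZR (dimA (nth i Rs rect0)) * IZR (dimB (nth i Rs rect0))).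
  { induction i; intros Hi.
    - simpl. rewrite Rmult_1_r. eapply Rle_trans. apply HA.
      assert (IZR (Aconst p) <= IZR (dimA (nth 0%nat Rs rect0))) by (apply IZR_le; lia).
      assert (IZR (Aconst p) <= IZR (dimB (nth 0%nat Rs rect0))) by (apply IZR_le; lia). nra.
    - specialize (IHi ltac:(lia)). destruct (Hv i ltac:(lia)) as [Hvv _].
      destruct (Hpos i ltac:(lia)) as [Hai Hbi]. apply IZR_le in Hai, Hbi.
      destruct (Hmon i ltac:(lia)) as [Hma Hmb]. apply IZR_le in Hma, Hmb.
      rewrite !minus_IZR in Hvv. simpl pow.
      assert (0 <= / (sq*sq) * (1+sq)^i).
      { apply Rmult_le_pos. left; apply Rinv_0_lt_compat; nra. apply pow_le; lra. }
      destruct Hvv as [Hvv|Hvv]; nra. }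
  specialize (Hprod (n-1)%nat (le_n _)).
  apply IZR_le in Hiii. rewrite plus_IZR in Hiii.
  set (x := IZR (dimA (nth (n-1) Rs rect0))) in *. set (y := IZR (dimB (nth (n-1) Rs rect0))) in *.
  assert (x * y <= (x+y)*(x+y)/4) by (pose proof (Rle_0_sqr (x-y)); unfold Rsqr in *; lra).
  assert ((x+y)*(x+y) <= IZR (Bconst p) * IZR (Bconst p)) by (apply Rmult_le_compat; lra).
  lra.
Qed.

Lemma main_bound p Rs : 0 < p < 1/10 -> good p Rs ->
  (forall r, In r Rs -> In r (rects (2 * Bconst p + 8))) /\
  INR (length Rs) <= 6 * ln (/ qq p) / sqrt (qq p) + 2.
Proof.
  intros Hp Hg. pose proof (q_facts p Hp) as Hq.
  set (q := qq p) in *. set (sq := sqrt q). set (L := ln (/ q)).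
  assert (Hsqq : sq * sq = q) by (apply sqrt_sqrt; lra).
  assert (Hsq : 0 < sq < 1/3).
  { assert (0 < sq) by (apply sqrt_lt_R0; lra). split; auto. nra. }
  assert (HA1 : 1 / sq <= IZR (Aconst p)) by (unfold Aconst; apply Zceil_ge).
  assert (HA0 : 0 <= IZR (Aconst p)).
  { assert (0 < 1/sq) by (apply Rdiv_lt_0_compat; lra). lra. }
  assert (HA : / (sq * sq) <= IZR (Aconst p) * IZR (Aconst p)).
  { rewrite Rinv_mult. assert (0 < 1/sq) by (apply Rdiv_lt_0_compat; lra).
    replace (/sq) with (1/sq) by (unfold Rdiv; lra). nra. }
  assert (HB : IZR (Bconst p) <= / q * L) by (unfold Bconst; apply Zfloor_le).
  assert (HeL : exp L = / q) by (apply exp_ln; apply Rinv_0_lt_compat; lra).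
  assert (HLe : L <= exp L) by (pose proof (exp_ineq1_le L); lra).
  assert (HL2 : 2 < L).
  { unfold L. rewrite <- (ln_exp 2). apply ln_increasing. apply exp_pos.
    replace 2 with (1+1) by lra. rewrite exp_plus. pose proof exp_le_3. pose proof (exp_pos 1).
    assert (9 < / q).
    { apply (Rmult_lt_reg_r q). lra. rewrite Rinv_l by lra. lra. } nra. }
  destruct (good_analysis p Rs sq 0 0 Hg eq_refl Hsq HA HA0) as (Hn & Hin & Hpr & HB2).
  set (n := (length Rs - 1)%nat) in *.
  split.
  - intros r Hr. destruct (In_nth Rs r rect0 Hr) as (i & Hi & <-).
    destruct (Hin i ltac:(lia)). now apply rects_in.
  - assert (Hlen : length Rs = S (S (n - 1))) by lia. rewrite Hlen.
    assert (HB0 : 0 <= IZR (Bconst p)) by (apply IZR_le; lia).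
    assert (Hc : (1 + sq) ^ (n - 1) <= exp (3 * L)).
    { assert (/ (sq*sq) * (1+sq)^(n-1) <= (/q * L) * (/q*L) / 4).
      { eapply Rle_trans. apply Hpr. apply Rmult_le_compat_r. lra. apply Rmult_le_compat; lra. }
      rewrite Hsqq in H.
      assert (Hq0 : 0 < /q) by (apply Rinv_0_lt_compat; lra).
      replace (3 * L) with (L + L + L) by lra. rewrite !exp_plus, HeL.
      assert ((1+sq)^(n-1) <= /q * L * L / 4).
      { apply (Rmult_le_reg_l (/q)). auto. nra. }
      assert (/q * L * L / 4 <= /q * /q * /q). 
      { rewrite <- HeL in *. assert (0 <= L) by lra. nra. }
      lra. }
    assert (Hd : exp (INR (n-1) * (sq/2)) <= exp (3 * L)).
    { rewrite <- exp_pow'. eapply Rle_trans; [|apply Hc]. apply pow_incr.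
      split. left; apply exp_pos. apply exp_half_le. lra. }
    apply exp_le_inv' in Hd. rewrite !S_INR.
    assert (INR (n-1) <= 6 * L / sq).
    { apply (Rmult_le_reg_r (sq/2)). lra. unfold Rdiv. rewrite Rmult_assoc.
      replace (/ sq * (sq * /2)) with (/2) by (field; lra). lra. }
    fold q sq L. lra.
Qed.

Theorem lemma14 :
  exists C8 : R, forall p : R, 0 < p < 1/10 ->
    forall L : list (list rect),
      NoDup L -> Forall (good p) L ->
      INR (length L) <= exp (C8 / sqrt (qq p) * (ln (/ qq p)) ^ 2).
Proof.
  exists 147. intros p Hp Ls HND HF.
  pose proof (q_facts p Hp) as Hq.
  set (q := qq p) in *. set (sq := sqrt q). set (L := ln (/ q)).
  assert (Hsqq : sq * sq = q) by (apply sqrt_sqrt; lra).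
  assert (Hsq : 0 < sq < 1/3).
  { assert (0 < sq) by (apply sqrt_lt_R0; lra). split; auto. nra. }
  assert (HB : IZR (Bconst p) <= / q * L) by (unfold Bconst; apply Zfloor_le).
  assert (HeL : exp L = / q) by (apply exp_ln; apply Rinv_0_lt_compat; lra).
  assert (HLe : L <= exp L) by (pose proof (exp_ineq1_le L); lra).
  assert (HL2 : 2 < L).
  { unfold L. rewrite <- (ln_exp 2). apply ln_increasing. apply exp_pos.
    replace 2 with (1+1) by lra. rewrite exp_plus. pose proof exp_le_3. pose proof (exp_pos 1).
    assert (9 < / q).
    { apply (Rmult_lt_reg_r q). lra. rewrite Rinv_l by lra. lra. } nra. }
  assert (Hq0 : 0 < /q) by (apply Rinv_0_lt_compat; lra).
  set (K := (2 * Bconst p + 8)%Z).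
  set (m := (Z.to_nat (up (6 * L / sq)) + 2)%nat).
  assert (Hpos6 : 0 < 6 * L / sq) by (apply Rdiv_lt_0_compat; lra).
  destruct (archimed (6 * L / sq)) as [Hu1 Hu2].
  assert (Hup0 : (0 < up (6 * L / sq))%Z) by (apply lt_IZR; lra).
  assert (Hm : INR m = IZR (up (6 * L / sq)) + 2).
  { unfold m. rewrite plus_INR, INR_IZR_INZ, Z2Nat.id by lia. simpl. lra. }
  assert (Hincl : incl Ls (upto (rects K) m)).
  { intros Rs HRs. rewrite Forall_forall in HF. specialize (HF Rs HRs).
    destruct (main_bound p Rs Hp HF) as [H1 H2]. apply upto_in; auto.
    apply INR_le. fold q sq L in H2. lra. }
  pose proof (NoDup_incl_length HND Hincl) as Hl.
  pose proof (upto_len (rects K) m) as Hl2. rewrite rects_len in Hl2.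
  apply le_INR in Hl, Hl2.
  assert (HB0 : (0 <= Bconst p)%Z).
  { assert (HBg : /q * L - 1 < IZR (Bconst p)).
    { unfold Bconst, Defs.Zfloor. fold q L. destruct (archimed (/ q * L)). rewrite minus_IZR. lra. }
    assert (0 < /q * L) by nra. assert (-1 < Bconst p)%Z by (apply lt_IZR; lra). lia. }
  assert (HM : INR (Z.to_nat (2 * K + 1)) <= exp (5 * L)).
  { rewrite INR_IZR_INZ, Z2Nat.id by lia. unfold K. rewrite !plus_IZR, !mult_IZR.
    replace (5 * L) with (L + L + 5 + (3 * L - 5)) by lra. rewrite !exp_plus, HeL.
    assert (1 <= exp (3 * L - 5)) by (pose proof (exp_ineq1_le (3 * L - 5)); lra).
    assert (32 <= exp 5).
    { replace 5 with (1+1+1+1+1) by lra. rewrite !exp_plus. pose proof (exp_ineq1_le 1). 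
      assert (2 <= exp 1) by lra. 
      assert (4 <= exp 1 * exp 1) by nra. assert (8 <= exp 1 * exp 1 * exp 1) by nra.
      assert (16 <= exp 1 * exp 1 * exp 1 * exp 1) by nra. nra. }
    assert (1 <= /q) by lra.
    assert (/ q * L <= /q * /q) by (apply Rmult_le_compat_l; lra).
    assert (1 <= /q * /q) by nra.
    assert (/q * /q * 32 <= /q * /q * exp 5) by (apply Rmult_le_compat_l; nra).
    assert (0 <= /q * /q * exp 5) by nra.
    assert (/q*/q*exp 5 <= /q*/q*exp 5*exp(3*L-5)) by (rewrite <- (Rmult_1_r (/q*/q*exp 5)) at 1; apply Rmult_le_compat_l; lra).
    rewrite !plus_IZR, !mult_IZR. lra. }
  set (M := INR (Z.to_nat (2 * K + 1))) in *.
  assert (HM0 : 1 <= M).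
  { unfold M. rewrite INR_IZR_INZ, Z2Nat.id by lia. apply IZR_le. unfold K. lia. }
  rewrite pow_INR, plus_INR, pow_INR in Hl2. change (INR 1) with 1 in Hl2. fold M in Hl2.
  assert (HM4 : M ^ 4 + 1 <= exp (21 * L)).
  { assert (M ^ 4 <= exp (5 * L) ^ 4) by (apply pow_incr; lra).
    rewrite exp_pow' in H. replace (INR 4 * (5 * L)) with (20 * L) in H by (simpl; lra).
    replace (21 * L) with (20 * L + L) by lra. rewrite exp_plus.
    assert (2 <= exp L) by lra. assert (1 <= M^4) by (apply pow_R1_Rle; lra).
    assert (0 < exp (20 * L)) by apply exp_pos. nra. }
  assert (Hfin : (M ^ 4 + 1) ^ m <= exp (147 / sq * L ^ 2)).
  { eapply Rle_trans. apply pow_incr. split; [|apply HM4]. pose proof (pow_le M 4). lra.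
    rewrite exp_pow'. apply exp_mono. rewrite Hm.
    assert (6 * L / sq * sq = 6 * L) by (field; lra).
    assert (3 * sq <= L) by lra.
    assert ((6 * L / sq + 3) * (21 * L) <= 147 / sq * L ^ 2).
    { apply (Rmult_le_reg_r sq). lra. 
      replace (147 / sq * L ^ 2 * sq) with (147 * L * L) by (field; lra).
      replace ((6 * L / sq + 3) * (21 * L) * sq) with (126 * L * L + 63 * L * sq) by (field; lra).
      nra. }
    assert (0 <= 21 * L) by lra. nra. }
  fold sq L. lra.
Qed.
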